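(* Let $R$ be a regular run. Then (1) the term SafeToOpen is discrete; (2) for every $t\ge0$, if SafeToOpen holds at $t+$ then it holds at $t$; (3) if SafeToOpen becomes true at a moment $t$, then TrackStatus$(x)$ becomes empty at $t$ for some track $x$.
   Context: Setting (evolving algebra for the railroad crossing). States are structures over a vocabulary containing: a finite universe Tracks; the reals and ExtendedReals $=\mathbb{R}\cup\{\infty\}$ with standard $<$ and $+$ ($\infty$ largest); a nullary real-valued symbol $\mathrm{CT}$ (current time); positive real constants $d_{close},d_{open},d_{min},d_{max}$ with $d_{close}<d_{min}\le d_{max}$; a unary function TrackStatus from Tracks to $\{\text{empty},\text{coming},\text{incrossing}\}$; a unary function Deadline from Tracks to ExtendedReals; a nullary Dir with values in $\{\text{open},\text{close}\}$; a nullary GateStatus with values in $\{\text{opened},\text{closed}\}$. Put $W=d_{min}-d_{close}$ and $\Delta_{close}=d_{close}+(d_{max}-d_{min})=d_{max}-W$. For a track $x$, $s(x)$ is the condition [$\mathrm{TrackStatus}(x)=\text{empty}$ or $\mathrm{CT}+d_{open}<\mathrm{Deadline}(x)$], and SafeToOpen is $\forall x\in\mathrm{Tracks}\ s(x)$. The program has two modules (agents). Gate: simultaneously OpenGate ''if Dir=open then GateStatus:=opened'' and CloseGate ''if Dir=close then GateStatus:=closed''. Controller: simultaneously, for every track $x$, SetDeadline$(x)$ ''if TrackStatus$(x)$=coming and Deadline$(x)=\infty$ then Deadline$(x):=\mathrm{CT}+W$'', SignalClose$(x)$ ''if $\mathrm{CT}=$Deadline$(x)$ then Dir:=close'', ClearDeadline$(x)$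 ''if TrackStatus$(x)$=empty and Deadline$(x)<\infty$ then Deadline$(x):=\infty$'', together with SignalOpen ''if Dir=close and SafeToOpen then Dir:=open''. Executing a module means computing all updates it generates in the current state and performing them simultaneously (nothing happens if the update set is inconsistent). A module is enabled at a state if its update set is consistent and contains an update that changes the state. TrackStatus is external (changed only by the environment); Deadline, Dir, GateStatus are internal (changed only by the modules); other symbols are static. Runs: for $t\mapsto R(t)$, $t\in[0,\infty)$, let $\rho(t)$ be the reduct of $R(t)$ without CT. $R$ is a pre-run if all $R(t)$ share a superuniverse, $\mathrm{CT}=t$ in $R(t)$, and for every $\tau>0$ there are $0=t_0<\dots<t_n=\tau$ with $\rho$ constant on each $(t_i,t_{i+1})$. For a term $e$ (free variables fixed), $e_t$ is its value in $R(t)$, $e_{t+}$ (resp. $e_{t-}$, $t>0$) its constant value on some $(t,t+\epsilon)$ (resp. $(t-\epsilon,t)$); likewise $\rho(t\pm)$. $e$ holds over an interval if it holds at each point; $e$ becomes (is set to) $a$ at $t$ if $e_{t-}\ne a=e_t$ or $e_t\neq a=e_{t+}$. A moment $t$ is significant for $e$ if every neighbourhood of $t$ contains a moment $a$ with $e_a\ne e_t$; $e$ is discrete if its set of significant moments has no limit point in $[0,\infty)$. A pre-run is a run if (i) whenever $\rho(t+)\neq\rho(t)$, $\rho(t+)$ is the CT-free reduct of the result of executing some modules at $R(t)$ (these agents fire at $t$), with external functions equal in $\rho(t)$ and $\rho(t+)$; (ii) whenever $t>0$ and $\rho(t)\ne\rho(t-)$, they differ only in external functions. An agent is immediate if it fires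 at every moment it is enabled; bounded if immediate or there is $b>0$ with no interval $(t,t+b)$ over which it is enabled but never fires. Initial states: TrackStatus$(x)$=empty and Deadline$(x)=\infty$ for every track $x$. A regular run is a run $R$ with $R(0)$ initial such that: (Train Motion) for each track $x$ there is a finite or infinite sequence $0=t_0<t_1<t_2<\cdots$ (the significant moments of $x$) with TrackStatus$(x)$=empty over each $[t_{3i},t_{3i+1})$, =coming over each $[t_{3i+1},t_{3i+2})$ where $d_{min}\le t_{3i+2}-t_{3i+1}\le d_{max}$, =incrossing over each $[t_{3i+2},t_{3i+3})$, and, if the sequence is finite with last element $t_k$, then $3\mid k$ and TrackStatus$(x)$=empty over $[t_k,\infty)$; (Controller Timing) Controller is immediate; (Gate Timing) Gate is bounded, there is no interval $(t,t+d_{close})$ over which Dir=close and GateStatus=opened both hold, and no interval $(t,t+d_{open})$ over which Dir=open and GateStatus=closed both hold. *)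

(* Defs.v *)
From Stdlib Require Import Reals FinFun.
Open Scope R_scope.

Inductive ER : Type := Fin (r : R) | Inf.

Definition ER_lt (a b : ER) : Prop :=
  match a, b with
  | Fin x, Fin y => x < y
  | Fin _, Inf => True
  | Inf, _ => False
  end.

Inductive TStatus : Type := empty | coming | incrossing.
Inductive DirV : Type := open | close.
Inductive GateV : Type := opened | closed.

Record consts : Type := Consts { d_close : R; d_open : R; d_min : R; d_max : R }.

Definition good_consts (c : consts) : Prop :=
  0 < d_close c /\ 0 < d_open c /\ 0 < d_min c /\ 0 < d_max c /\
  d_close c < d_min c /\ d_min c <= d_max c.

Definition W (c : consts) : R := d_min c - d_close c.

(* The CT-free reduct of a state restricted to its dynamic symbols
   (universe and static symbols are fixed parameters). *)
Record state (Tracks : Type) : Type := State {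
  TrackStatus : Tracks -> TStatus;
  Deadline : Tracks -> ER;
  Dir : DirV;
  GateStatus : GateV }.
Arguments State {Tracks}.
Arguments TrackStatus {Tracks}.
Arguments Deadline {Tracks}.
Arguments Dir {Tracks}.
Arguments GateStatus {Tracks}.

Section Program.
Variable Tracks : Type.
Variable c : consts.

(* s(x) and SafeToOpen, evaluated at the state (σ, CT = t). *)
Definition s_cond (σ : state Tracks) (t : R) (x : Tracks) : Prop :=
  TrackStatus σ x = empty \/ ER_lt (Fin (t + d_open c)) (Deadline σ x).

Definition SafeToOpen (σ : state Tracks) (t : R) : Prop :=
  forall x : Tracks, s_cond σ t x.

Inductive update : Type :=
  | UDeadline (x : Tracks) (v : ER)
  | UDir (d : DirV)
  | UGate (g : GateV).

Inductive agent : Type := Gate | Controller.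

Definition gate_updates (σ : state Tracks) (t : R) (u : update) : Prop :=
  (Dir σ = open /\ u = UGate opened) \/ (Dir σ = close /\ u = UGate closed).

Definition controller_updates (σ : state Tracks) (t : R) (u : update) : Prop :=
  (exists x, TrackStatus σ x = coming /\ Deadline σ x = Inf /\
             u = UDeadline x (Fin (t + W c)))
  \/ (exists x, Fin t = Deadline σ x /\ u = UDir close)
  \/ (exists x, TrackStatus σ x = empty /\ ER_lt (Deadline σ x) Inf /\
             u = UDeadline x Inf)
  \/ (Dir σ = close /\ SafeToOpen σ t /\ u = UDir open).

Definition updates_of (a : agent) : state Tracks -> R -> update -> Prop :=
  match a with Gate => gate_updates | Controller => controller_updates end.

Definition consistent (U : update -> Prop) : Prop :=
  (forall x v w, U (UDeadline x v) -> U (UDeadline x w) -> v = w) /\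
  (forall d e, U (UDir d) -> U (UDir e) -> d = e) /\
  (forall g h, U (UGate g) -> U (UGate h) -> g = h).

Definition apply_updates (σ : state Tracks) (U : update -> Prop)
    (σ' : state Tracks) : Prop :=
  TrackStatus σ' = TrackStatus σ /\
  (forall x, (U (UDeadline x (Deadline σ' x))) \/
             ((forall v, ~ U (UDeadline x v)) /\ Deadline σ' x = Deadline σ x)) /\
  (U (UDir (Dir σ')) \/ ((forall d, ~ U (UDir d)) /\ Dir σ' = Dir σ)) /\
  (U (UGate (GateStatus σ')) \/
     ((forall g, ~ U (UGate g)) /\ GateStatus σ' = GateStatus σ)).

(* Executing the set of modules S at the state (σ, CT = t): every module in S
   contributes its update set, unless that update set is inconsistent (then
   that module does nothing); all contributed updates are performed
   simultaneously. (Gate and Controller update disjoint locations.) *)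
Definition exec_updates (S : agent -> Prop) (σ : state Tracks) (t : R)
    (u : update) : Prop :=
  exists a, S a /\ consistent (updates_of a σ t) /\ updates_of a σ t u.

Definition execute (S : agent -> Prop) (σ : state Tracks) (t : R)
    (σ' : state Tracks) : Prop :=
  apply_updates σ (exec_updates S σ t) σ'.

Definition changes (σ : state Tracks) (u : update) : Prop :=
  match u with
  | UDeadline x v => Deadline σ x <> v
  | UDir d => Dir σ <> d
  | UGate g => GateStatus σ <> g
  end.

Definition enabled (a : agent) (σ : state Tracks) (t : R) : Prop :=
  consistent (updates_of a σ t) /\
  exists u, updates_of a σ t u /\ changes σ u.

(* A run is given by ρ : R -> state (the CT-free reduct of R(t); CT(R(t)) = t,
   only t >= 0 is relevant) together with the firing relation. *)

Definition state_plus (ρ : R -> state Tracks) (t : R) (σ : state Tracks) : Prop :=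
  exists eps, 0 < eps /\ forall s, t < s < t + eps -> ρ s = σ.

Definition state_minus (ρ : R -> state Tracks) (t : R) (σ : state Tracks) : Prop :=
  exists eps, 0 < eps <= t /\ forall s, t - eps < s < t -> ρ s = σ.

Definition pre_run (ρ : R -> state Tracks) : Prop :=
  forall tau, 0 < tau ->
  exists (n : nat) (p : nat -> R),
    p 0%nat = 0 /\ p n = tau /\
    (forall i, (i < n)%nat -> p i < p (S i)) /\
    (forall i, (i < n)%nat -> forall s s',
        p i < s < p (S i) -> p i < s' < p (S i) -> ρ s = ρ s').

Definition is_run (ρ : R -> state Tracks) (fires : agent -> R -> Prop) : Prop :=
  pre_run ρ /\
  (forall t σ, 0 <= t -> state_plus ρ t σ -> σ <> ρ t ->
      TrackStatus σ = TrackStatus (ρ t) /\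
      execute (fun a => fires a t) (ρ t) t σ) /\
  (* the agents that fire at t are those of the witnessing set in (i) *)
  (forall a t, fires a t -> 0 <= t /\
      exists σ, state_plus ρ t σ /\ σ <> ρ t) /\
  (forall t σ, 0 < t -> state_minus ρ t σ -> σ <> ρ t ->
      Deadline σ = Deadline (ρ t) /\ Dir σ = Dir (ρ t) /\
      GateStatus σ = GateStatus (ρ t)).

Definition immediate (ρ : R -> state Tracks) (fires : agent -> R -> Prop)
    (a : agent) : Prop :=
  forall t, 0 <= t -> enabled a (ρ t) t -> fires a t.

Definition bounded (ρ : R -> state Tracks) (fires : agent -> R -> Prop)
    (a : agent) : Prop :=
  immediate ρ fires a \/
  exists b, 0 < b /\ forall t, 0 <= t ->
    ~ (forall s, t < s < t + b -> enabled a (ρ s) s /\ ~ fires a s).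

Definition initial (σ : state Tracks) : Prop :=
  forall x, TrackStatus σ x = empty /\ Deadline σ x = Inf.

(* A finite (last index Some k) or infinite (None) sequence ts. *)
Definition idx_ok (N : option nat) (i : nat) : Prop :=
  match N with None => True | Some k => (i <= k)%nat end.

Definition train_motion (ρ : R -> state Tracks) (x : Tracks) : Prop :=
  exists (ts : nat -> R) (N : option nat),
    ts 0%nat = 0 /\
    (forall i, idx_ok N (S i) -> ts i < ts (S i)) /\
    (forall i, idx_ok N (3 * i + 1) -> forall s,
        ts (3 * i)%nat <= s < ts (3 * i + 1)%nat -> TrackStatus (ρ s) x = empty) /\
    (forall i, idx_ok N (3 * i + 2) ->
        (forall s, ts (3 * i + 1)%nat <= s < ts (3 * i + 2)%nat ->
            TrackStatus (ρ s) x = coming) /\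
        d_min c <= ts (3 * i + 2)%nat - ts (3 * i + 1)%nat <= d_max c) /\
    (forall i, idx_ok N (3 * i + 3) -> forall s,
        ts (3 * i + 2)%nat <= s < ts (3 * i + 3)%nat ->
        TrackStatus (ρ s) x = incrossing) /\
    (forall k, N = Some k ->
        (exists j, k = (3 * j)%nat) /\
        forall s, ts k <= s -> TrackStatus (ρ s) x = empty).

Definition regular_run (ρ : R -> state Tracks) (fires : agent -> R -> Prop) : Prop :=
  is_run ρ fires /\ initial (ρ 0) /\
  (forall x, train_motion ρ x) /\
  immediate ρ fires Controller /\
  bounded ρ fires Gate /\
  (forall t, 0 <= t -> ~ (forall s, t < s < t + d_close c ->
        Dir (ρ s) = close /\ GateStatus (ρ s) = opened)) /\
  (forall t, 0 <= t -> ~ (forall s, t < s < t + d_open c ->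
        Dir (ρ s) = open /\ GateStatus (ρ s) = closed)).

End Program.

Definition significant (P : R -> Prop) (t : R) : Prop :=
  forall eps, 0 < eps -> exists a, 0 <= a /\ Rabs (a - t) < eps /\ ~ (P a <-> P t).

Definition discrete (P : R -> Prop) : Prop :=
  forall l, 0 <= l -> exists eps, 0 < eps /\
    forall t, 0 <= t -> significant P t -> 0 < Rabs (t - l) < eps -> False.

Definition holds_plus (P : R -> Prop) (t : R) : Prop :=
  exists eps, 0 < eps /\ forall s, t < s < t + eps -> P s.

Definition becomes_true (P : R -> Prop) (t : R) : Prop :=
  (0 < t /\ (exists eps, 0 < eps <= t /\ forall s, t - eps < s < t -> ~ P s) /\ P t)
  \/ (~ P t /\ holds_plus P t).

Definition becomes {A : Type} (f : R -> A) (a : A) (t : R) : Prop :=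
  (0 < t /\ (exists b eps, b <> a /\ 0 < eps <= t /\
                 forall s, t - eps < s < t -> f s = b) /\ f t = a)
  \/ (f t <> a /\ exists eps, 0 < eps /\ forall s, t < s < t + eps -> f s = a).

(* Main.v *)
Require Import Defs.
From Stdlib Require Import Reals FinFun Lra Lia Classical.
Open Scope R_scope.

Section Aux.
Variable Tracks : Type.
Variable c : consts.
Variable ρ : R -> state Tracks.

Definition STOf := fun t => SafeToOpen Tracks c (ρ t) t.

Lemma ER_mono a b d : a <= b -> ER_lt (Fin b) d -> ER_lt (Fin a) d.
Proof. destruct d; simpl; auto. intros; lra. Qed.

Lemma STO_mono σ s s' : s <= s' -> SafeToOpen Tracks c σ s' -> SafeToOpen Tracks c σ s.
Proof.
  intros Hle H x. destruct (H x) as [H1|H1]; [left; auto| right].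
  eapply ER_mono; [|exact H1]. lra.
Qed.

Lemma idx_search n (p : nat -> R) t : p 0%nat = 0 ->
  (forall i, (i < n)%nat -> p i < p (S i)) -> 0 <= t < p n ->
  exists i, (i < n)%nat /\ p i <= t < p (S i).
Proof.
  revert t. induction n as [|m IH]; intros t H0 Hm Ht.
  - rewrite H0 in Ht. lra.
  - destruct (Rlt_dec t (p m)) as [Hl|Hl].
    + destruct (IH t H0) as [i [Hi Hb]]; [intros i Hi; apply Hm; lia| lra|].
      exists i. split; [lia|auto].
    + exists m. split; [lia|]. lra.
Qed.

Lemma right_const t : pre_run Tracks ρ -> 0 <= t ->
  exists eps, 0 < eps /\ forall s s', t < s < t + eps -> t < s' < t + eps -> ρ s = ρ s'.
Proof.
  intros Hpre Ht. destruct (Hpre (t+1)) as [n [p [H0 [Hn [Hm Hc]]]]]; [lra|].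
  destruct (idx_search n p t H0 Hm) as [i [Hi Hb]]; [lra|].
  exists (p (S i) - t). split; [lra|]. intros s s' Hs Hs'.
  apply (Hc i Hi); lra.
Qed.

Lemma left_const t : pre_run Tracks ρ -> 0 < t ->
  exists eps, 0 < eps <= t /\ forall s s', t - eps < s < t -> t - eps < s' < t -> ρ s = ρ s'.
Proof.
  intros Hpre Ht. destruct (Hpre t) as [n [p [H0 [Hn [Hm Hc]]]]]; [lra|].
  destruct n as [|m]. { rewrite H0 in Hn. lra. }
  assert (Hpm : p m < t) by (rewrite <- Hn; apply Hm; lia).
  exists (Rmin t (t - p m)). split.
  - split; [apply Rmin_glb_lt; lra| apply Rmin_l].
  - intros s s' Hs Hs'. pose proof (Rmin_r t (t - p m)).
    apply (Hc m); [lia| |]; rewrite Hn; lra.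
Qed.

Lemma sig_unique lo hi t1 t2 :
  (forall s s', lo < s < hi -> lo < s' < hi -> ρ s = ρ s') ->
  lo < t1 -> t1 < t2 -> t2 < hi -> significant STOf t1 -> significant STOf t2 -> False.
Proof.
  intros Hc H1 H12 H2 S1 S2. set (m := (t1+t2)/2).
  assert (Hmono : forall a b, lo < a -> a <= b -> b < hi -> STOf b -> STOf a).
  { intros a b Ha Hab Hb Hs. unfold STOf in *.
    rewrite (Hc a b) by lra. eapply STO_mono; [exact Hab| exact Hs]. }
  destruct (classic (STOf m)) as [Hm|Hm].
  - destruct (S1 (Rmin (t1 - lo) (m - t1))) as [a [Ha0 [Ha Hn]]].
    { apply Rmin_glb_lt; unfold m; lra. }
    pose proof (Rmin_l (t1 - lo) (m - t1)). pose proof (Rmin_r (t1 - lo) (m - t1)).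
    apply Rabs_def2 in Ha. apply Hn. split; intros _.
    + apply (Hmono t1 m); unfold m in *; try lra; auto.
    + apply (Hmono a m); unfold m in *; try lra; auto.
  - destruct (S2 (Rmin (t2 - m) (hi - t2))) as [a [Ha0 [Ha Hn]]].
    { apply Rmin_glb_lt; unfold m; lra. }
    pose proof (Rmin_l (t2 - m) (hi - t2)). pose proof (Rmin_r (t2 - m) (hi - t2)).
    apply Rabs_def2 in Ha. apply Hn. split; intros HH; exfalso; apply Hm.
    + apply (Hmono m a); unfold m in *; try lra; auto.
    + apply (Hmono m t2); unfold m in *; try lra; auto.
Qed.

Lemma sig_local lo hi l :
  (forall s s', lo < s < hi -> lo < s' < hi -> ρ s = ρ s') ->
  exists eps, 0 < eps /\ forall t, lo < t < hi -> significant STOf t ->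
     0 < Rabs (t - l) < eps -> False.
Proof.
  intros Hc.
  destruct (classic (exists a, lo < a < hi /\ significant STOf a /\ a <> l)) as [[a [Ha [Sa Hal]]]|Hno].
  - exists (Rabs (a - l)). split; [apply Rabs_pos_lt; lra|].
    intros t Ht St Hd. destruct (total_order_T t a) as [[Hlt|Heq]|Hgt].
    + apply (sig_unique lo hi t a); auto; lra.
    + subst; lra.
    + apply (sig_unique lo hi a t); auto; lra.
  - exists 1. split; [lra|]. intros t Ht St Hd. apply Hno. exists t.
    repeat split; auto; try lra. intros ->. rewrite Rminus_diag, Rabs_R0 in Hd. lra.
Qed.

End Aux.

Theorem mainTheorem6 (Tracks : Type) (c : consts)
  (HTfin : Finite Tracks) (Hc : good_consts c)
  (ρ : R -> state Tracks) (fires : agent -> R -> Prop)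
  (Hreg : regular_run Tracks c ρ fires) :
  let STO := fun t => SafeToOpen Tracks c (ρ t) t in
  discrete STO /\
  (forall t, 0 <= t -> holds_plus STO t -> STO t) /\
  (forall t, 0 <= t -> becomes_true STO t ->
     exists x : Tracks, becomes (fun s => TrackStatus (ρ s) x) empty t).
Proof.
  intro STO. change STO with (STOf Tracks c ρ).
  destruct Hreg as [[Hpre [Hi [Hf Hii]]] _].
  assert (P2 : forall t, 0 <= t -> holds_plus (STOf Tracks c ρ) t -> STOf Tracks c ρ t).
  { intros t Ht [e [He Hs]].
    destruct (right_const Tracks ρ t Hpre Ht) as [e' [He' Hcst]].
    set (eps := Rmin e e').
    assert (Heps : 0 < eps) by (apply Rmin_glb_lt; auto).
    pose proof (Rmin_l e e'). pose proof (Rmin_r e e').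
    set (s0 := t + eps / 2).
    assert (HS0 : STOf Tracks c ρ s0) by (apply Hs; unfold s0, eps in *; lra).
    unfold STOf in *.
    destruct (classic (ρ s0 = ρ t)) as [Heq|Hne].
    - rewrite <- Heq. eapply STO_mono; [|exact HS0]. unfold s0; lra.
    - assert (Hsp : state_plus Tracks ρ t (ρ s0)).
      { exists eps. split; auto. intros s Hs'. apply Hcst; unfold s0, eps in *; lra. }
      destruct (Hi t (ρ s0) Ht Hsp Hne) as [HTS [_ [HD _]]].
      intros x. destruct (HS0 x) as [Hx|Hx].
      + left. rewrite <- HTS. exact Hx.
      + destruct (HD x) as [HU|[_ HU]].
        * destruct HU as [a [_ [_ Hu]]]. destruct a; simpl in Hu.
          -- unfold gate_updates in Hu. destruct Hu as [[_ Hu]|[_ Hu]]; discriminate.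
          -- unfold controller_updates in Hu.
             destruct Hu as [[x' [_ [HI Hu]]]|[[x' [_ Hu]]|[[x' [HE [_ Hu]]]|[_ [_ Hu]]]]];
               try discriminate; injection Hu; intros; subst.
             ++ right. rewrite HI. exact I.
             ++ left. exact HE.
        * right. rewrite <- HU. eapply ER_mono; [|exact Hx]. unfold s0; lra. }
  split; [|split; [exact P2|]].
  -
    intros l Hl. destruct (Hpre (l+1)) as [n [p [H0 [Hn [Hm Hcs]]]]]; [lra|].
    destruct (idx_search n p l H0 Hm) as [i [Hin Hb]]; [lra|].
    destruct (sig_local Tracks c ρ (p i) (p (S i)) l (Hcs i Hin)) as [e2 [He2 H2]].
    destruct (Rlt_dec (p i) l) as [Hlt|Hge].
    + exists (Rmin e2 (Rmin (l - p i) (p (S i) - l))). split.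
      { repeat apply Rmin_glb_lt; lra. }
      intros t Ht St Hd.
      pose proof (Rmin_l e2 (Rmin (l - p i) (p (S i) - l))).
      pose proof (Rmin_r e2 (Rmin (l - p i) (p (S i) - l))).
      pose proof (Rmin_l (l - p i) (p (S i) - l)).
      pose proof (Rmin_r (l - p i) (p (S i) - l)).
      destruct Hd as [Hd1 Hd2]. pose proof (Rabs_def2 _ _ Hd2).
      apply (H2 t); auto; lra.
    + assert (Hpi : p i = l) by lra.
      destruct i as [|j].
      * exists (Rmin e2 (p 1%nat - l)). split.
        { apply Rmin_glb_lt; lra. }
        intros t Ht St Hd.
        pose proof (Rmin_l e2 (p 1%nat - l)). pose proof (Rmin_r e2 (p 1%nat - l)).
        destruct Hd as [Hd1 Hd2]. pose proof (Rabs_def2 _ _ Hd2).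
        assert (t <> l) by (intros ->; rewrite Rminus_diag, Rabs_R0 in Hd1; lra).
        rewrite H0 in Hpi.
        apply (H2 t); auto; try lra.
      * assert (Hj : (j < n)%nat) by lia.
        assert (Hjl : p j < l) by (rewrite <- Hpi; apply Hm; lia).
        destruct (sig_local Tracks c ρ (p j) (p (S j)) l (Hcs j Hj)) as [e1 [He1 H1]].
        set (E := Rmin (Rmin e1 e2) (Rmin (l - p j) (p (S (S j)) - l))).
        exists E. split.
        { unfold E; repeat apply Rmin_glb_lt; lra. }
        intros t Ht St Hd.
        pose proof (Rmin_l (Rmin e1 e2) (Rmin (l - p j) (p (S (S j)) - l))).
        pose proof (Rmin_r (Rmin e1 e2) (Rmin (l - p j) (p (S (S j)) - l))).
        pose proof (Rmin_l e1 e2). pose proof (Rmin_r e1 e2).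
        pose proof (Rmin_l (l - p j) (p (S (S j)) - l)).
        pose proof (Rmin_r (l - p j) (p (S (S j)) - l)).
        fold E in H, H3.
        destruct Hd as [Hd1 Hd2]. pose proof (Rabs_def2 _ _ Hd2).
        assert (t <> l) by (intros ->; rewrite Rminus_diag, Rabs_R0 in Hd1; lra).
        destruct (Rlt_dec t l) as [Htl|Htl].
        -- apply (H1 t); auto; try lra.
        -- apply (H2 t); auto; lra.
  - intros t Ht Hb.
    destruct Hb as [[Htpos [[e [He Hn]] Hst]] | [Hn Hp]].
    2:{ exfalso. exact (Hn (P2 t Ht Hp)). }
    destruct (left_const Tracks ρ t Hpre Htpos) as [e' [He' Hcst]].
    set (eps := Rmin e e').
    assert (Heps : 0 < eps) by (apply Rmin_glb_lt; lra).
    pose proof (Rmin_l e e'). pose proof (Rmin_r e e').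
    set (s0 := t - eps / 2).
    assert (HS0 : ~ STOf Tracks c ρ s0) by (apply Hn; unfold s0, eps in *; lra).
    unfold STOf in *.
    destruct (classic (ρ s0 = ρ t)) as [Heq|Hne].
    + exfalso. apply HS0. rewrite Heq. eapply STO_mono; [|exact Hst]. unfold s0; lra.
    + assert (Hsm : state_minus Tracks ρ t (ρ s0)).
      { exists eps. split; [unfold eps in *; lra|]. intros s Hs'. apply Hcst; unfold s0, eps in *; lra. }
      destruct (Hii t (ρ s0) Htpos Hsm Hne) as [HD _].
      destruct (not_all_ex_not _ _ HS0) as [x Hx].
      exists x. unfold s_cond in Hx.
      destruct (Hst x) as [HE|HL].
      * left. split; auto. split; auto.
        exists (TrackStatus (ρ s0) x), eps. split.
        { intros He0. apply Hx. left. exact He0. }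
        split; [unfold eps in *; lra|]. intros s Hs. rewrite (Hcst s s0) by (unfold s0, eps in *; lra). reflexivity.
      * exfalso. apply Hx. right. rewrite HD. eapply ER_mono; [|exact HL]. unfold s0; lra.
Qed.
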